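(* If an analytic function $f(z)=\sum_{n\ge0}f_nz^n$ on $\mathbb{D}$ satisfies $\sup_{n\ge0}|f_n|e^{c\sqrt n}<\infty$ for some $c>0$, then for every $h\in H^\infty$ the function $T_{\overline h}f$ also satisfies $\sup_{n\ge0}|(T_{\overline h}f)_n|e^{c''\sqrt n}<\infty$ for some $c''>0$, where $(T_{\overline h}f)_n$ are its Taylor coefficients.
   Context: $H^\infty$ is the algebra of bounded analytic functions on $\mathbb{D}$. For $h\in H^\infty$ and $f\in H^2$, $T_{\overline h}f=P_+(\overline hf)$, where $P_+:L^2(\mathbb{T})\to H^2$ is the orthogonal projection onto the Hardy space (such $f$ lies in $H^2$). *)

(* Defs.v *)
From Stdlib Require Import Reals.
From Coquelicot Require Import Coquelicot.
Open Scope R_scope.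

Definition in_disc (z : Complex.C) : Prop := Cmod z < 1.

(* A function analytic on the disc is represented by its Taylor coefficients
   a : nat -> C; its value at z is the sum of the power series. *)
Definition ps_sum (a : nat -> Complex.C) (z : Complex.C) (s : Complex.C) : Prop :=
  is_series (fun k => Cmult (a k) (pow_n z k)) s.

Definition analytic_on_disc (a : nat -> Complex.C) : Prop :=
  forall z, in_disc z -> exists s, ps_sum a z s.

Definition Hinf (h : nat -> Complex.C) : Prop :=
  analytic_on_disc h /\
  exists B : R, forall z s, in_disc z -> ps_sum h z s -> Cmod s <= B.

(* Taylor coefficients of T_{conj h} f = P_+(conj(h) f): the n-th Fourier
   coefficient of conj(h) f on the circle, i.e. <f, z^n h>_{L^2(T)}
   = sum_{k>=0} conj(h_k) f_{n+k}. *)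
Definition toeplitz_coef (h f : nat -> Complex.C) (n : nat) (v : Complex.C) : Prop :=
  is_series (fun k => Cmult (Cconj (h k)) (f (n + k)%nat)) v.

Definition subexp_decay (a : nat -> Complex.C) (c : R) : Prop :=
  exists M : R, forall n : nat, Cmod (a n) * exp (c * sqrt (INR n)) <= M.

(* Main.v *)
Require Import Defs.
From Stdlib Require Import Reals Lra Lia.
From Stdlib Require Import IndefiniteDescription.
From Coquelicot Require Import Coquelicot.
Open Scope R_scope.
From Stdlib Require Import Arith.

Lemma Cmod_normC (z:C) : Cmod z = @norm C_AbsRing C_NormedModule z. Proof. reflexivity. Qed.

Lemma sum_n_Cmod_le (a : nat -> C) (b : nat -> R) N :
  (forall n, Cmod (a n) <= b n) -> Cmod (sum_n a N) <= sum_n b N.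
Proof.
  intros H. induction N.
  - rewrite !sum_O. apply H.
  - rewrite !sum_Sn. eapply Rle_trans. apply Cmod_triangle.
    apply Rplus_le_compat; [exact IHN| apply H].
Qed.

Lemma series_Cmod_le (a : nat -> C) (b : nat -> R) L S :
  is_series a L -> is_series b S -> (forall n, Cmod (a n) <= b n) -> Cmod L <= S.
Proof.
  intros HL HS H.
  assert (Hl : is_lim_seq (fun N => Cmod (sum_n a N)) (Cmod L)).
  { unfold is_lim_seq.
    eapply filterlim_ext. intros N. rewrite Cmod_normC. reflexivity.
    rewrite Cmod_normC.
    eapply filterlim_comp. exact HL. apply (@filterlim_norm C_AbsRing C_NormedModule). }
  assert (Hs : is_lim_seq (sum_n b) S) by exact HS.
  pose proof (is_lim_seq_le _ _ _ _ (fun N => sum_n_Cmod_le a b N H) Hl Hs).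
  exact H0.
Qed.

Lemma tele_sum n : sum_n (fun k => / ((INR k + 1) * (INR k + 2))) n = 1 - / (INR n + 2).
Proof.
  induction n.
  - rewrite sum_O. match goal with |- ?a = ?b => change (@eq R a b) end. simpl. field.
  - rewrite sum_Sn, IHn. match goal with |- ?a = ?b => change (@eq R a b) end. rewrite S_INR. change plus with Rplus. 
    assert (0 <= INR n) by apply pos_INR. field; lra.
Qed.

Lemma tele_ex : ex_series (fun k => / ((INR k + 1) * (INR k + 2))).
Proof.
  destruct (ex_finite_lim_seq_incr (sum_n (fun k => / ((INR k + 1) * (INR k + 2)))) 1) as [l Hl].
  - intros n. rewrite sum_Sn. change plus with Rplus.
    assert (0 <= INR (S n)) by apply pos_INR.
    assert (0 < / ((INR (S n) + 1) * (INR (S n) + 2))).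
    { apply Rinv_0_lt_compat. nra. } lra.
  - intros n. rewrite tele_sum. assert (0 <= INR n) by apply pos_INR.
    assert (0 < / (INR n + 2)) by (apply Rinv_0_lt_compat; lra). lra.
  - exists l. exact Hl.
Qed.

Lemma exp_ge_quartic x : 0 <= x -> 1 + x ^ 4 / 256 <= exp x.
Proof.
  intros Hx.
  assert (E : exp x = exp (x/4) ^ 4).
  { simpl. rewrite Rmult_1_r, <- !exp_plus. f_equal. field. }
  rewrite E.
  pose proof (exp_ineq1_le (x/4)).
  assert (1 + x/4 >= 0) by lra.
  assert ((1 + x/4)^4 <= exp (x/4) ^ 4).
  { apply pow_incr. lra. }
  assert (1 + x^4/256 <= (1 + x/4)^4).
  { simpl. nra. }
  lra.
Qed.

Definition Kc (a : R) := 2 + 1536 / a ^ 4.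

Lemma exp_sqrt_bound a k : 0 < a ->
  exp (- (a * sqrt (INR k))) <= Kc a * / ((INR k + 1) * (INR k + 2)).
Proof.
  intros Ha.
  set (x := a * sqrt (INR k)).
  assert (Hk : 0 <= INR k) by apply pos_INR.
  assert (Hx : 0 <= x) by (unfold x; apply Rmult_le_pos; [lra| apply sqrt_pos]).
  assert (Hx4 : x ^ 4 = a ^ 4 * INR k ^ 2).
  { unfold x. replace (INR k ^ 2) with (sqrt (INR k) ^ 2 * sqrt (INR k) ^ 2).
    - ring.
    - rewrite <- Rsqr_pow2, Rsqr_sqrt; auto. ring. }
  pose proof (exp_ge_quartic x Hx) as He.
  rewrite exp_Ropp.
  assert (Hpos : 0 < exp x) by apply exp_pos.
  assert (Ha4 : 0 < a ^ 4) by (apply pow_lt; lra).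
  assert (Hk2 : 3 * INR k <= 5 * INR k ^ 2 + 0).
  { destruct k. simpl. lra. rewrite S_INR. assert (0<= INR k) by apply pos_INR. nra. }
  assert (HD : 0 < (INR k + 1) * (INR k + 2)) by nra.
  assert (Kc a * (1 + x ^ 4 / 256) >= (INR k + 1) * (INR k + 2)).
  { unfold Kc. rewrite Hx4.
    assert (E1 : 1536 / a ^ 4 * (1 + a ^ 4 * INR k ^ 2 / 256) = 1536 / a^4 + 6 * INR k ^ 2) by (field; lra).
    assert (0 <= a^4 * INR k ^2) by (apply Rmult_le_pos; [lra| apply pow_le; lra]).
    assert (0 < 1536 / a^4) by (apply Rdiv_lt_0_compat; lra).
    rewrite Rmult_plus_distr_r, E1. nra. }
  apply Rmult_le_reg_r with ((INR k + 1) * (INR k + 2) * exp x).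
  { apply Rmult_lt_0_compat; lra. }
  replace (/ exp x * ((INR k + 1) * (INR k + 2) * exp x)) with ((INR k + 1) * (INR k + 2)) by (field; lra).
  replace (Kc a * / ((INR k + 1) * (INR k + 2)) * ((INR k + 1) * (INR k + 2) * exp x)) with (Kc a * exp x) by (field; lra).
  assert (0 < Kc a) by (unfold Kc; assert (0 < 1536 / a^4) by (apply Rdiv_lt_0_compat; lra); lra).
  nra.
Qed.

Lemma ex_exp_sqrt a : 0 < a -> ex_series (fun k => exp (- (a * sqrt (INR k)))).
Proof.
  intros Ha.
  apply (@ex_series_le R_AbsRing R_CompleteNormedModule _ (fun k => Kc a * / ((INR k + 1) * (INR k + 2)))).
  - intros n. change norm with Rabs. rewrite Rabs_pos_eq by (left; apply exp_pos).
    apply exp_sqrt_bound; auto.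
  - apply (ex_series_scal (V := R_NormedModule) (Kc a)). apply tele_ex.
Qed.

Lemma demoivre r t m : pow_n ((r * cos t, r * sin t) : C) m = ((r^m * cos (INR m * t), r^m * sin (INR m * t)) : C).
Proof.
  induction m.
  - simpl. rewrite !Rmult_0_l, cos_0, sin_0. change (@one C_Ring) with (RtoC 1). unfold RtoC. f_equal; ring.
  - change (pow_n ((r * cos t, r * sin t) : C) (S m)) with (Cmult (r * cos t, r * sin t) (pow_n ((r * cos t, r * sin t) : C) m)).
    rewrite IHm. unfold Cmult. simpl fst; simpl snd. rewrite S_INR.
    replace ((INR m + 1) * t) with (t + INR m * t) by ring.
    rewrite cos_plus, sin_plus. simpl. f_equal; ring.
Qed.

Lemma geom_C (u : C) n : Cmult (sum_n (pow_n u) n) (Cminus u 1) = Cminus (pow_n u (S n)) 1.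
Proof.
  induction n.
  - rewrite sum_O. change (pow_n u 1) with (Cmult u (pow_n u 0)). change (pow_n u 0) with (RtoC 1). ring.
  - rewrite sum_Sn. change plus with Cplus.
    change (pow_n u (S (S n))) with (Cmult u (pow_n u (S n))).
    change (pow_n u (S n)) with (Cmult u (pow_n u n)) in *.
    replace (Cmult (Cplus (sum_n (pow_n u) n) (Cmult u (pow_n u n))) (Cminus u 1))
      with (Cplus (Cmult (sum_n (pow_n u) n) (Cminus u 1)) (Cmult (Cmult u (pow_n u n)) (Cminus u 1))) by ring.
    rewrite IHn. ring.
Qed.

Lemma cos_2kPI (m : nat) : cos (2 * INR m * PI) = 1.
Proof. pose proof (cos_period 0 m). rewrite Rplus_0_l, cos_0 in H. exact H. Qed.
Lemma sin_2kPI (m : nat) : sin (2 * INR m * PI) = 0.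
Proof. pose proof (sin_period 0 m). rewrite Rplus_0_l, sin_0 in H. exact H. Qed.

Lemma Cmult_reg0 (X v : C) : v <> RtoC 0 -> Cmult X v = RtoC 0 -> X = RtoC 0.
Proof.
  intros Hv H.
  assert (E : X = Cmult (Cmult X v) (Cinv v)) by (field; exact Hv).
  rewrite E, H. ring.
Qed.

Lemma unit_sum_zero N m k : (m < N)%nat -> (k < N)%nat -> m <> k ->
  sum_n (fun j => ((cos ((INR m - INR k) * (2*PI*INR j/INR N)), sin ((INR m - INR k) * (2*PI*INR j/INR N))) : C)) (pred N) = RtoC 0.
Proof.
  intros Hm Hk Hmk.
  assert (HN : 0 < INR N) by (apply lt_0_INR; lia).
  set (al := (INR m - INR k) * (2 * PI / INR N)).
  set (u := ((1 * cos al, 1 * sin al)) : C).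
  assert (Hterm : forall j, ((cos ((INR m - INR k) * (2*PI*INR j/INR N)), sin ((INR m - INR k) * (2*PI*INR j/INR N))) : C) = pow_n u j).
  { intros j. unfold u. rewrite demoivre. rewrite pow1.
    replace (INR j * al) with ((INR m - INR k) * (2*PI*INR j/INR N)) by (unfold al; field; lra).
    f_equal; ring. }
  rewrite (sum_n_ext _ _ _ Hterm).
  assert (HuN : pow_n u N = RtoC 1).
  { unfold u. rewrite demoivre, pow1.
    replace (INR N * al) with (2 * INR m * PI - 2 * INR k * PI) by (unfold al; field; lra).
    rewrite cos_minus, sin_minus, !cos_2kPI, !sin_2kPI. unfold RtoC. f_equal; ring. }
  assert (Hu1 : Cminus u 1 <> RtoC 0).
  { intros E. unfold u, Cminus, Cplus, Copp in E. simpl in E. injection E. intros _ E1.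
    assert (Hc : cos al = 1) by lra.
    replace al with (2 * (al / 2)) in Hc by field.
    rewrite cos_2a_sin in Hc.
    assert (Hs : sin (al / 2) = 0) by nra.
    assert (Hlt : INR m - INR k < INR N /\ INR k - INR m < INR N).
    { split; apply Rlt_le_trans with (INR N - 0); try lra;
      unfold Rminus; apply Rplus_lt_le_compat; try (apply lt_INR; lia);
      apply Ropp_le_contravar; apply pos_INR. }
    assert (Hal2 : al / 2 = (INR m - INR k) * PI / INR N) by (unfold al; field; lra).
    destruct (proj1 (Nat.lt_gt_cases m k) Hmk) as [Hlt' | Hgt'].
    - assert (0 < INR k - INR m) by (apply lt_INR in Hlt'; lra).
      assert (0 < sin (- (al / 2))).
      { apply sin_gt_0; rewrite Hal2.
        - replace (- ((INR m - INR k) * PI / INR N)) with ((INR k - INR m) * PI / INR N) by (field; lra).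
          apply Rdiv_lt_0_compat; [apply Rmult_lt_0_compat; [lra| apply PI_RGT_0]| lra].
        - replace (- ((INR m - INR k) * PI / INR N)) with ((INR k - INR m) * PI / INR N) by (field; lra).
          apply Rmult_lt_reg_r with (INR N); auto. unfold Rdiv. rewrite Rmult_assoc, Rinv_l by lra.
          pose proof PI_RGT_0. nra. }
      rewrite sin_neg in H0. lra.
    - assert (0 < INR m - INR k) by (apply lt_INR in Hgt'; lra).
      assert (0 < sin (al / 2)).
      { apply sin_gt_0; rewrite Hal2.
        - apply Rdiv_lt_0_compat; [apply Rmult_lt_0_compat; [lra| apply PI_RGT_0]| lra].
        - apply Rmult_lt_reg_r with (INR N); auto. unfold Rdiv. rewrite Rmult_assoc, Rinv_l by lra.
          pose proof PI_RGT_0. nra. }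
      lra. }
  pose proof (geom_C u (pred N)) as G.
  replace (S (pred N)) with N in G by lia. rewrite HuN in G.
  assert (G0 : Cmult (sum_n (pow_n u) (pred N)) (Cminus u 1) = RtoC 0).
  { rewrite G. unfold Cminus, Cplus, Copp, RtoC. simpl. f_equal; ring. }
  clear G. rename G0 into G.
  exact (Cmult_reg0 _ _ Hu1 G).
Qed.


Lemma Cmod_pow_n (z : C) m : Cmod (pow_n z m) = Cmod z ^ m.
Proof. change (pow_n z m) with (Cpow z m). apply Cmod_pow. Qed.

Lemma term_bound h rho : analytic_on_disc h -> 0 < rho < 1 ->
  exists K, 0 <= K /\ forall m, Cmod (h m) * rho ^ m <= K.
Proof.
  intros Ha Hr.
  destruct (Ha (RtoC rho)) as [s Hs].
  { unfold in_disc. rewrite Cmod_R, Rabs_pos_eq; lra. }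
  unfold ps_sum in Hs.
  set (a := fun k => Cmult (h k) (pow_n (RtoC rho) k)) in *.
  destruct (@filterlim_bounded C_AbsRing C_NormedModule (sum_n a) (ex_intro _ s Hs)) as [M HM].
  assert (HM' : forall n, Cmod (sum_n a n) <= M) by (intros n; rewrite Cmod_normC; apply HM).
  assert (HM0 : 0 <= M) by (eapply Rle_trans; [apply Cmod_ge_0| apply (HM' 0%nat)]).
  exists (2 * M). split; [lra|].
  intros m.
  assert (Ea : Cmod (a m) = Cmod (h m) * rho ^ m).
  { unfold a. rewrite Cmod_mult, Cmod_pow_n, Cmod_R, Rabs_pos_eq; lra. }
  rewrite <- Ea.
  destruct m.
  - pose proof (HM' 0%nat). rewrite sum_O in H. lra.
  - assert (E : a (S m) = Cplus (sum_n a (S m)) (Copp (sum_n a m))).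
    { rewrite sum_Sn. change plus with Cplus. 
      generalize (sum_n a m) (a (S m)). intros X Y. change (@eq C Y (Cplus (Cplus X Y) (Copp X))). ring. }
    rewrite E. eapply Rle_trans. apply Cmod_triangle. rewrite Cmod_opp.
    pose proof (HM' (S m)). pose proof (HM' m). lra.
Qed.
Lemma is_series_sum_n (a : nat -> nat -> C) (l : nat -> C) n :
  (forall j, is_series (a j) (l j)) ->
  is_series (fun m => sum_n (fun j => a j m) n) (sum_n l n).
Proof.
  intros H. induction n.
  - rewrite sum_O. eapply is_series_ext; [| apply (H 0%nat)]. intros m. rewrite sum_O. reflexivity.
  - rewrite sum_Sn. eapply is_series_ext; [| apply (is_series_plus _ _ _ _ IHn (H (S n)))].
    intros m. simpl. rewrite sum_Sn. reflexivity.
Qed.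

Lemma sum_n_one n : sum_n (fun _ => RtoC 1) n = RtoC (INR (S n)).
Proof.
  induction n.
  - rewrite sum_O. simpl. reflexivity.
  - rewrite sum_Sn, IHn. change plus with Cplus. rewrite (S_INR (S n)).
    unfold RtoC, Cplus. simpl. f_equal; ring.
Qed.

Lemma is_series_ind (k : nat) (x : C) :
  is_series (fun m => if Nat.eq_dec m k then x else RtoC 0) x.
Proof.
  assert (Hs : forall n, (k <= n)%nat -> sum_n (fun m => if Nat.eq_dec m k then x else RtoC 0) n = x).
  { assert (H0 : forall n, (n < k)%nat -> sum_n (fun m => if Nat.eq_dec m k then x else RtoC 0) n = RtoC 0).
    { induction n; intros Hn.
      - rewrite sum_O. destruct (Nat.eq_dec 0 k); [lia| reflexivity].
      - rewrite sum_Sn, IHn by lia. destruct (Nat.eq_dec (S n) k); [lia|].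
        change plus with Cplus. change (@eq C (Cplus (RtoC 0) (RtoC 0)) (RtoC 0)). ring. }
    induction n; intros Hn.
    - rewrite sum_O. destruct (Nat.eq_dec 0 k); [reflexivity| lia].
    - destruct (Nat.eq_dec (S n) k) as [E|E].
      + rewrite sum_Sn, H0 by lia. destruct (Nat.eq_dec (S n) k); [|lia].
        change plus with Cplus. change (@eq C (Cplus (RtoC 0) x) x). ring.
      + rewrite sum_Sn, IHn by lia. destruct (Nat.eq_dec (S n) k); [lia|].
        change plus with Cplus. change (@eq C (Cplus x (RtoC 0)) x). ring. }
  unfold is_series.
  apply filterlim_ext_loc with (fun _ => x).
  - exists k. intros n Hn. symmetry. apply Hs. lia.
  - apply filterlim_const.
Qed.
Definition th (N j : nat) := 2*PI*INR j/INR N.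
Definition zp (r : R) (N j : nat) : C := (r * cos (th N j), r * sin (th N j)).

Lemma Cmod_cs t : Cmod ((cos t, sin t) : C) = 1.
Proof.
  unfold Cmod. simpl fst; simpl snd. pose proof (sin2_cos2 t). unfold Rsqr in H.
  replace (cos t ^ 2 + sin t ^ 2) with 1 by (simpl; lra). apply sqrt_1.
Qed.

Lemma Cmod_cs' t : Cmod ((cos t, - sin t) : C) = 1.
Proof.
  unfold Cmod. simpl fst; simpl snd. pose proof (sin2_cos2 t). unfold Rsqr in H.
  replace (cos t ^ 2 + (- sin t) ^ 2) with 1 by (simpl; lra). apply sqrt_1.
Qed.

Lemma prod_ident r k m t (hm : C) :
  Cmult ((cos (INR k * t), - sin (INR k * t)) : C) (Cmult hm (pow_n ((r * cos t, r * sin t) : C) m))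
  = Cmult (Cmult hm (RtoC (r ^ m))) ((cos ((INR m - INR k) * t), sin ((INR m - INR k) * t)) : C).
Proof.
  rewrite demoivre. destruct hm as [x y].
  replace ((INR m - INR k) * t) with (INR m * t - INR k * t) by ring.
  rewrite cos_minus, sin_minus. unfold Cmult, RtoC. simpl. f_equal; ring.
Qed.

Lemma sum_n_Cmult_l (a : C) u n : sum_n (fun k => Cmult a (u k)) n = Cmult a (sum_n u n).
Proof. apply (sum_n_mult_l (K:=C_Ring)). Qed.

Lemma cauchy_core (h : nat -> C) B k r N (s : nat -> C) (b : nat -> R) Sb :
  0 < r -> (k < N)%nat ->
  (forall j, is_series (fun m => Cmult (h m) (pow_n (zp r N j) m)) (s j)) ->
  (forall j, Cmod (s j) <= B) ->
  (forall m, (N <= m)%nat -> Cmod (h m) * r ^ m * INR N <= b m) ->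
  (forall m, 0 <= b m) -> is_series b Sb ->
  INR N * (Cmod (h k) * r ^ k) <= INR N * B + Sb.
Proof.
  intros Hr HkN Hs HsB Hb Hb0 HSb.
  set (w := fun j => ((cos (INR k * th N j), - sin (INR k * th N j)) : C)).
  set (E := fun m => sum_n (fun j => ((cos ((INR m - INR k) * th N j), sin ((INR m - INR k) * th N j)) : C)) (pred N)).
  set (A := sum_n (fun j => Cmult (w j) (s j)) (pred N)).
  assert (HA : is_series (fun m => Cmult (Cmult (h m) (RtoC (r ^ m))) (E m)) A).
  { eapply is_series_ext; [| apply (is_series_sum_n (fun j m => Cmult (w j) (Cmult (h m) (pow_n (zp r N j) m))))].
    - intros m. simpl. unfold E. rewrite <- sum_n_Cmult_l. apply sum_n_ext. intros j.
      unfold w, zp. rewrite prod_ident. reflexivity.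
    - intros j. apply (is_series_scal (K := C_AbsRing) (V := C_NormedModule) (w j)). apply Hs. }
  assert (HAB : Cmod A <= INR N * B).
  { unfold A. eapply Rle_trans. apply (sum_n_Cmod_le _ (fun _ => B)).
    - intros j. rewrite Cmod_mult. unfold w. rewrite Cmod_cs'. rewrite Rmult_1_l. apply HsB.
    - rewrite sum_n_const. replace (S (pred N)) with N by lia. lra. }
  assert (EK : E k = RtoC (INR N)).
  { unfold E. rewrite (sum_n_ext _ (fun _ => RtoC 1)).
    - rewrite sum_n_one. replace (S (pred N)) with N by lia. reflexivity.
    - intros j. rewrite Rminus_diag, Rmult_0_l, cos_0, sin_0. reflexivity. }
  assert (E0 : forall m, (m < N)%nat -> m <> k -> E m = RtoC 0).
  { intros m Hm Hmk. unfold E, th. apply unit_sum_zero; auto. }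
  assert (EN : forall m, Cmod (E m) <= INR N).
  { intros m. unfold E. eapply Rle_trans. apply (sum_n_Cmod_le _ (fun _ => 1)).
    - intros j. rewrite Cmod_cs. lra.
    - rewrite sum_n_const. replace (S (pred N)) with N by lia. lra. }
  set (x := Cmult (Cmult (h k) (RtoC (r ^ k))) (RtoC (INR N))).
  set (t := fun m => if Nat.eq_dec m k then RtoC 0 else Cmult (Cmult (h m) (RtoC (r ^ m))) (E m)).
  assert (Ht : is_series t (Cplus A (Copp x))).
  { eapply is_series_ext; [| apply (is_series_minus _ _ _ _ HA (is_series_ind k x))].
    intros m. simpl. unfold t. change plus with Cplus. change opp with Copp.
    destruct (Nat.eq_dec m k) as [->|].
    + rewrite EK. unfold x. change (@eq C (Cplus (Cmult (Cmult (h k) (RtoC (r ^ k))) (RtoC (INR N))) (Copp (Cmult (Cmult (h k) (RtoC (r ^ k))) (RtoC (INR N))))) (RtoC 0)). ring.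
    + change (@eq C (Cplus (Cmult (Cmult (h m) (RtoC (r ^ m))) (E m)) (Copp (RtoC 0))) (Cmult (Cmult (h m) (RtoC (r ^ m))) (E m))). ring. }
  assert (Htb : Cmod (Cplus A (Copp x)) <= Sb).
  { apply (series_Cmod_le t b _ _ Ht HSb). intros m. unfold t.
    destruct (Nat.eq_dec m k). { rewrite Cmod_0. apply Hb0. }
    destruct (le_lt_dec N m) as [HNm|HmN].
    - rewrite !Cmod_mult, Cmod_R, Rabs_pos_eq by (apply pow_le; lra).
      eapply Rle_trans; [| apply (Hb m HNm)].
      apply Rmult_le_compat_l. apply Rmult_le_pos; [apply Cmod_ge_0| apply pow_le; lra]. apply EN.
    - rewrite E0 by auto. rewrite Cmod_mult, Cmod_0, Rmult_0_r. apply Hb0. }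
  assert (Hx : Cmod x = INR N * (Cmod (h k) * r ^ k)).
  { unfold x. rewrite !Cmod_mult, !Cmod_R, !Rabs_pos_eq. ring. apply pos_INR. apply pow_le; lra. }
  rewrite <- Hx.
  assert (Ex : x = Cplus A (Copp (Cplus A (Copp x)))) by ring.
  rewrite Ex. eapply Rle_trans. apply Cmod_triangle. rewrite Cmod_opp. lra.
Qed.

Lemma bernoulli x n : 0 <= x <= 1 -> 1 - INR n * x <= (1 - x) ^ n.
Proof.
  intros Hx. induction n.
  - simpl. lra.
  - rewrite S_INR. simpl.
    assert (0 <= INR n) by apply pos_INR.
    assert (0 <= INR n * x * x) by (apply Rmult_le_pos; [apply Rmult_le_pos|]; lra).
    nra.
Qed.

Lemma Cmod_zp r N j : 0 <= r -> Cmod (zp r N j) = r.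
Proof.
  intros Hr. unfold Cmod, zp. simpl fst; simpl snd.
  pose proof (sin2_cos2 (th N j)). unfold Rsqr in H.
  replace ((r * cos (th N j)) ^ 2 + (r * sin (th N j)) ^ 2) with (r ^ 2).
  - apply sqrt_pow2; lra.
  - simpl. nra.
Qed.

Lemma coef_bound h : Hinf h -> exists Hb, forall k, Cmod (h k) <= Hb.
Proof.
  intros [Ha [B HB]]. exists (2 * (B + 1)). intros k.
  assert (Hk : 0 <= INR k) by apply pos_INR.
  set (r := 1 - / (2 * (INR k + 1))).
  assert (Hi : 0 < / (2 * (INR k + 1)) <= 1/2).
  { split. apply Rinv_0_lt_compat; lra.
    unfold Rdiv. rewrite Rmult_1_l. apply Rinv_le_contravar; lra. }
  assert (Hr : 0 < r < 1) by (unfold r; lra).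
  set (rho := (1 + r) / 2).
  assert (Hrho : 0 < rho < 1) by (unfold rho; lra).
  set (q := r / rho).
  assert (Hq : 0 < q < 1).
  { unfold q. split. apply Rdiv_lt_0_compat; lra.
    apply Rmult_lt_reg_r with rho. lra. unfold Rdiv. rewrite Rmult_assoc, Rinv_l by lra. unfold rho. lra. }
  destruct (term_bound h rho Ha Hrho) as [K [HK0 HK]].
  destruct (pow_lt_1_zero q (ltac:(rewrite Rabs_pos_eq; lra)) ((1 - q) / (K + 1)) (ltac:(apply Rdiv_lt_0_compat; lra))) as [N0 HN0].
  set (N := Nat.max N0 (S k)).
  assert (HkN : (k < N)%nat) by (unfold N; lia).
  assert (HNpos : 0 < INR N) by (apply lt_0_INR; lia).
  assert (HqN : K * q ^ N <= 1 - q).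
  { specialize (HN0 N ltac:(unfold N; lia)). rewrite Rabs_pos_eq in HN0 by (apply pow_le; lra).
    assert (K * q ^ N <= K * ((1 - q) / (K + 1))) by (apply Rmult_le_compat_l; lra).
    assert (K * ((1 - q) / (K + 1)) <= 1 - q).
    { unfold Rdiv. apply Rmult_le_reg_r with (K + 1). lra.
      replace (K * ((1 - q) * / (K + 1)) * (K + 1)) with (K * (1 - q)) by (field; lra). nra. }
    lra. }
  destruct (functional_choice (fun j s => ps_sum h (zp r N j) s)) as [s Hs].
  { intros j. apply Ha. unfold in_disc. rewrite Cmod_zp; lra. }
  assert (HsB : forall j, Cmod (s j) <= B).
  { intros j. apply (HB (zp r N j)). unfold in_disc. rewrite Cmod_zp; lra. apply Hs. }
  set (b := fun m => if le_dec N m then INR N * K * q ^ m else 0).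
  set (Sb := INR N * K * q ^ N * / (1 - q)).
  assert (HSb : is_series b Sb).
  { apply (is_series_decr_n b N Sb). lia.
    assert (Hz : sum_n b (pred N) = 0).
    { assert (forall n, (n < N)%nat -> sum_n b n = 0).
      { induction n; intros Hn.
        - rewrite sum_O. unfold b. destruct (le_dec N 0); [lia| reflexivity].
        - rewrite sum_Sn, IHn by lia. unfold b. destruct (le_dec N (S n)); [lia|].
          change plus with Rplus. change (@eq R (0 + 0) 0). ring. }
      apply H. lia. }
    match goal with |- is_series _ ?X => assert (E : X = Sb) by (change (Sb - sum_n b (Init.Nat.pred N) = Sb); rewrite Hz; ring); rewrite E end.
    eapply is_series_ext; [| apply (is_series_scal (K := R_AbsRing) (V := R_NormedModule) (INR N * K * q ^ N) _ _ (is_series_geom q ltac:(rewrite Rabs_pos_eq; lra)))].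
    intros j. unfold b. destruct (le_dec N (N + j)); [|lia]. change scal with Rmult. change (@eq R (INR N * K * q ^ N * q ^ j) (INR N * K * q ^ (N + j))). rewrite pow_add. ring. }
  assert (Hb : forall m, (N <= m)%nat -> Cmod (h m) * r ^ m * INR N <= b m).
  { intros m Hm. unfold b. destruct (le_dec N m); [|lia].
    replace r with (rho * q) by (unfold q; field; lra).
    rewrite Rpow_mult_distr.
    specialize (HK m).
    assert (0 <= q ^ m) by (apply pow_le; lra).
    replace (Cmod (h m) * (rho ^ m * q ^ m) * INR N) with ((Cmod (h m) * rho ^ m) * (q ^ m * INR N)) by ring.
    replace (INR N * K * q ^ m) with (K * (q ^ m * INR N)) by ring.
    apply Rmult_le_compat_r; [apply Rmult_le_pos; lra| exact HK]. }
  assert (Hb0 : forall m, 0 <= b m).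
  { intros m. unfold b. destruct (le_dec N m); [|lra].
    apply Rmult_le_pos; [apply Rmult_le_pos; lra| apply pow_le; lra]. }
  pose proof (cauchy_core h B k r N s b Sb ltac:(lra) HkN Hs HsB Hb Hb0 HSb) as Hc.
  assert (HSb1 : Sb <= INR N).
  { unfold Sb. apply Rmult_le_reg_r with (1 - q). lra.
    rewrite Rmult_assoc, Rinv_l, Rmult_1_r by lra. nra. }
  assert (Hk1 : Cmod (h k) * r ^ k <= B + 1).
  { apply Rmult_le_reg_l with (INR N). lra. lra. }
  assert (Hrk : 1/2 <= r ^ k).
  { eapply Rle_trans; [| apply bernoulli; lra].
    apply Rmult_le_reg_r with (2 * (INR k + 1)). lra.
    rewrite Rmult_minus_distr_r, Rmult_assoc, Rinv_l by lra. lra. }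
  pose proof (Cmod_ge_0 (h k)). nra.
Qed.

Theorem mainTheorem15 (f h : nat -> Complex.C) (c : R) :
  analytic_on_disc f -> 0 < c -> subexp_decay f c -> Hinf h ->
  exists g : nat -> Complex.C,
    (forall n : nat, toeplitz_coef h f n (g n)) /\
    exists c2 : R, 0 < c2 /\ subexp_decay g c2.
Proof.
  intros _ Hc [M HM] Hh.
  destruct (coef_bound h Hh) as [Hb HHb].
  assert (Hb0 : 0 <= Hb) by (eapply Rle_trans; [apply Cmod_ge_0| apply (HHb 0%nat)]).
  set (a := c / 2).
  assert (Ha : 0 < a) by (unfold a; lra).
  set (Es := Series (fun k => exp (- (a * sqrt (INR k))))).
  assert (HEs : is_series (fun k => exp (- (a * sqrt (INR k)))) Es) by (apply Series_correct, ex_exp_sqrt, Ha).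
  assert (Hf : forall m, Cmod (f m) <= M * exp (- (c * sqrt (INR m)))).
  { intros m. specialize (HM m). rewrite exp_Ropp.
    pose proof (exp_pos (c * sqrt (INR m))).
    apply Rmult_le_reg_r with (exp (c * sqrt (INR m))); auto.
    rewrite Rmult_assoc, Rinv_l, Rmult_1_r by lra. exact HM. }
  assert (HM0 : 0 <= M) by (eapply Rle_trans; [| apply (HM 0%nat)];
    apply Rmult_le_pos; [apply Cmod_ge_0| left; apply exp_pos]).
  assert (Hsq : forall n k, a * sqrt (INR n) + a * sqrt (INR k) <= c * sqrt (INR (n + k))).
  { intros n k. rewrite plus_INR.
    assert (0 <= INR n) by apply pos_INR. assert (0 <= INR k) by apply pos_INR.
    assert (sqrt (INR n) <= sqrt (INR n + INR k)) by (apply sqrt_le_1_alt; lra).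
    assert (sqrt (INR k) <= sqrt (INR n + INR k)) by (apply sqrt_le_1_alt; lra).
    unfold a. nra. }
  set (bn := fun n k => Hb * M * exp (- (a * sqrt (INR n))) * exp (- (a * sqrt (INR k)))).
  assert (Hterm : forall n k, Cmod (Cmult (Cconj (h k)) (f (n + k)%nat)) <= bn n k).
  { intros n k. rewrite Cmod_mult, Cmod_conj. unfold bn.
    eapply Rle_trans. apply Rmult_le_compat; [apply Cmod_ge_0| apply Cmod_ge_0| apply HHb| apply Hf].
    replace (Hb * M * exp (- (a * sqrt (INR n))) * exp (- (a * sqrt (INR k))))
      with (Hb * M * exp (- (a * sqrt (INR n) + a * sqrt (INR k)))) by (rewrite (Rmult_assoc (Hb * M)), <- exp_plus; f_equal; f_equal; ring).
    rewrite <- Rmult_assoc. apply Rmult_le_compat_l. apply Rmult_le_pos; lra.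
    specialize (Hsq n k). destruct (Req_dec (- (c * sqrt (INR (n + k)))) (- (a * sqrt (INR n) + a * sqrt (INR k)))) as [E|E]; [rewrite E; lra| left; apply exp_increasing; lra]. }
  assert (Hbn : forall n, is_series (bn n) (Hb * M * exp (- (a * sqrt (INR n))) * Es)).
  { intros n. eapply is_series_ext; [| apply (is_series_scal (K := R_AbsRing) (V := R_NormedModule) (Hb * M * exp (- (a * sqrt (INR n)))) _ _ HEs)].
    intros k. reflexivity. }
  destruct (functional_choice (fun n v => toeplitz_coef h f n v)) as [g Hg].
  { intros n. unfold toeplitz_coef.
    apply (@ex_series_le C_AbsRing C_CompleteNormedModule _ (bn n)).
    - intros k. rewrite <- Cmod_normC. apply Hterm.
    - exists (Hb * M * exp (- (a * sqrt (INR n))) * Es). apply Hbn. }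
  exists g. split; [exact Hg|].
  exists a. split; [exact Ha|].
  exists (Hb * M * Es). intros n.
  pose proof (series_Cmod_le _ _ _ _ (Hg n) (Hbn n) (Hterm n)) as Hgn.
  apply Rmult_le_compat_r with (r := exp (a * sqrt (INR n))) in Hgn; [| left; apply exp_pos].
  eapply Rle_trans; [exact Hgn|].
  replace (Hb * M * exp (- (a * sqrt (INR n))) * Es * exp (a * sqrt (INR n)))
    with (Hb * M * Es * (exp (- (a * sqrt (INR n))) * exp (a * sqrt (INR n)))) by ring.
  rewrite <- exp_plus, Rplus_opp_l, exp_0. lra.
Qed.
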